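(* The set $\mathbb{I}$ of intervals of $\mathbb{F}$ is closed under intersections: if $I,J\in\mathbb{I}$ then $I\cap J\in\mathbb{I}$.
   Context: $\mathbb{F}$ is the free group on generators $a,b$ with identity $e$. For $n=4k+i$ with $k\in\mathbb{N}$ and $0\le i<4$, set $\ell_n=a,a^{-1},b,b^{-1}$ according as $i=0,1,2,3$. For $g\in\mathbb{F}$ and $S\subseteq\mathbb{F}$ let $gS=\{gs:s\in S\}$. Define $I_0=\{e\}$ and $I_{n+1}=I_n\cup\ell_nI_n$. An interval of $\mathbb{F}$ is either the empty set or a set of the form $wI_n$ with $w\in\mathbb{F}$, $n\in\mathbb{N}$; $\mathbb{I}$ denotes the set of intervals. *)

(* Defs.v *)
(* The free group F(a,b) is modelled concretely as the type of
   freely reduced words over the alphabet {a, a^-1, b, b^-1}. *)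
From HB Require Import structures.
From mathcomp Require Import all_boot.
Set Implicit Arguments. Unset Strict Implicit. Unset Printing Implicit Defensive.

Inductive gen := Ga | Gai | Gb | Gbi.

Definition gen_eqb (x y : gen) : bool :=
  match x, y with
  | Ga, Ga | Gai, Gai | Gb, Gb | Gbi, Gbi => true
  | _, _ => false
  end.

Lemma gen_eqP : Equality.axiom gen_eqb.
Proof. by case; case; constructor. Qed.

HB.instance Definition _ := hasDecEq.Build gen gen_eqP.

Definition gen_inv (x : gen) : gen :=
  match x with Ga => Gai | Gai => Ga | Gb => Gbi | Gbi => Gb end.

Fixpoint reduced (s : seq gen) : bool :=
  match s with
  | x :: ((y :: _) as t) => (y != gen_inv x) && reduced t
  | _ => true
  end.

Definition push (x : gen) (w : seq gen) : seq gen :=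
  match w with
  | y :: w' => if y == gen_inv x then w' else x :: w
  | [::] => [:: x]
  end.

Lemma reduced_behead (w : seq gen) : reduced w -> reduced (behead w).
Proof. by case: w => [|x [|y w]] //= /andP []. Qed.

Lemma push_reduced x w : reduced w -> reduced (push x w).
Proof.
case: w => [|y w] // Hw; rewrite /push.
case: ifP => Hy; first exact: (reduced_behead Hw).
by rewrite [reduced _]/= Hy; exact: Hw.
Qed.

Lemma foldr_push_reduced (u v : seq gen) :
  reduced v -> reduced (foldr push v u).
Proof. by elim: u => [|x u IH] //= Hv; apply: push_reduced; apply: IH. Qed.

Record FG := MkFG { fg_word :> seq gen; fg_red : reduced fg_word }.

Definition fg_e : FG := @MkFG [::] isT.

Definition fg_mul (u v : FG) : FG :=
  @MkFG (foldr push (fg_word v) (fg_word u)) (foldr_push_reduced u (fg_red v)).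

Definition fg_letter (x : gen) : FG := @MkFG [:: x] isT.

Definition fset := FG -> Prop.

Definition ell (n : nat) : FG :=
  fg_letter (match n %% 4 with 0 => Ga | 1 => Gai | 2 => Gb | _ => Gbi end).

Definition lmul (g : FG) (S : fset) : fset :=
  fun x => exists2 s, S s & x = fg_mul g s.

Definition fset_union (S T : fset) : fset := fun x => S x \/ T x.
Definition fset_inter (S T : fset) : fset := fun x => S x /\ T x.
Definition fset_eq (S T : fset) : Prop := forall x, S x <-> T x.

Fixpoint Iset (n : nat) : fset :=
  match n with
  | 0 => fun x => x = fg_e
  | n'.+1 => fset_union (Iset n') (lmul (ell n') (Iset n'))
  end.

Definition is_interval (S : fset) : Prop :=
  (forall x, ~ S x) \/ exists (w : FG) (n : nat), fset_eq S (lmul w (Iset n)).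

(* Main.v *)
From Stdlib Require Import Classical.
Require Import Defs.
From mathcomp Require Import all_boot zify.
Set Implicit Arguments. Unset Strict Implicit. Unset Printing Implicit Defensive.

Definition rk (c : gen) : nat := match c with Ga => 1 | Gai => 2 | Gb => 3 | Gbi => 4 end.
Definition nxt (c : gen) (p : nat) : nat := p + (rk c + 3 * p + 3) %% 4 + 1.
Definition dw (s : seq gen) : nat := foldr nxt 0 s.

Lemma nxt_gt c p : p < nxt c p.
Proof. rewrite /nxt; lia. Qed.
Lemma nxt_mod c p : nxt c p %% 4 = rk c %% 4.
Proof. rewrite /nxt; case: c => /=; lia. Qed.
Lemma nxt_min c p q : p < q -> q %% 4 = rk c %% 4 -> nxt c p <= q.
Proof. rewrite /nxt; case: c => /=; lia. Qed.
Lemma rk_inj c c' : rk c %% 4 = rk c' %% 4 -> c = c'.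
Proof. by case: c; case: c'. Qed.

Definition lt4 (n : nat) : gen := match n %% 4 with 0 => Ga | 1 => Gai | 2 => Gb | _ => Gbi end.
Lemma ellE n : ell n = fg_letter (lt4 n). Proof. by []. Qed.
Lemma lt4_mod n : rk (lt4 n) %% 4 = n.+1 %% 4.
Proof.
rewrite /lt4; case E: (n %% 4) => [|[|[|[|k]]]] /=; lia.
Qed.
Lemma inv_mod c : rk (gen_inv c) %% 4 <> rk c %% 4.
Proof. by case: c. Qed.
Lemma gen_invK c : gen_inv (gen_inv c) = c. Proof. by case: c. Qed.

Lemma dw_cons_mod c s : dw (c :: s) %% 4 = rk c %% 4.
Proof. exact: nxt_mod. Qed.
Lemma dw_cons_gt c s : dw s < dw (c :: s).
Proof. exact: nxt_gt. Qed.
Lemma dw_cat l s : dw s + size l <= dw (l ++ s).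
Proof.
elim: l => [|c l IH] /=; first by rewrite addn0.
have := nxt_gt c (dw (l ++ s)); rewrite /dw /= -/(dw _) in IH *; lia.
Qed.

Lemma push_inv x t : reduced t -> push x (push (gen_inv x) t) = t.
Proof.
case: t => [|y t] /=; first by rewrite /= eqxx.
case: (eqVneq y (gen_inv (gen_inv x))) => [->|ne].
  rewrite gen_invK /= => Hr; rewrite !gen_invK in Hr *; case: t Hr => [|z t] //= /andP [Hz _].
  by rewrite (negbTE Hz).
by move=> _; rewrite /= eqxx.
Qed.

Lemma reduced_cat l s : reduced l -> reduced s ->
  (if s is h :: _ then (if l is _ :: _ then h != gen_inv (last Ga l) else true) else true) ->
  reduced (l ++ s).
Proof.
elim: l => [|a l IH] //= Hl Hs J.
case: l IH Hl J => [|b l] IH /= Hl J.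
  by clear IH; case: s Hs J => [|h s] //= -> ->.
case/andP: Hl => Hb Hl; rewrite Hb /=; exact: (IH Hl Hs J).
Qed.

Lemma foldr_push_cat l s : reduced (l ++ s) -> foldr push s l = l ++ s.
Proof.
elim: l => [|a l IH] // Hr /=.
rewrite IH; last by have := reduced_behead Hr.
case: l Hr {IH} => [|b l] /=.
  by case: s => [|h s] //= /andP [/negbTE -> _].
by case/andP => /negbTE -> _.
Qed.

Definition winv (u : seq gen) := rev (map gen_inv u).
Lemma winv_cons a u : winv (a :: u) = winv u ++ [:: gen_inv a].
Proof. by rewrite /winv /= rev_cons cats1. Qed.
Lemma last_winv a u x0 : last x0 (winv (a :: u)) = gen_inv a.
Proof. by rewrite winv_cons last_cat. Qed.

Lemma winv_reduced u : reduced u -> reduced (winv u).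
Proof.
elim: u => [|a u IH] // Hu.
rewrite winv_cons; apply: reduced_cat => //; first by apply: IH; have := reduced_behead Hu.
case: u Hu {IH} => [|b u] /=; first by rewrite /winv.
case/andP=> Hb _; case E: (winv (b :: u)) => [|z w]; first by [].
rewrite -E last_winv; clear E; by move: Hb; case: a; case: b.
Qed.

Lemma fg_ext (u v : FG) : fg_word u = fg_word v -> u = v.
Proof.
case: u => u pu; case: v => v pv /= E; subst v.
by rewrite (bool_irrelevance pu pv).
Qed.

Lemma mul_push w x z : reduced w -> reduced z ->
  foldr push w (push x z) = push x (foldr push w z).
Proof.
move=> Hw; case: z => [|y z] // Hz /=.
case: ifP => [/eqP Ey|] //=.
by rewrite Ey push_inv //; apply: foldr_push_reduced; have := reduced_behead Hz.
Qed.

Lemma foldrA (a b c : seq gen) : reduced b -> reduced c ->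
  foldr push c (foldr push b a) = foldr push (foldr push c b) a.
Proof.
move=> Hb Hc; elim: a => [|x a IH] //=.
by rewrite mul_push // ?IH //; apply: foldr_push_reduced.
Qed.

Definition fg_inv (w : FG) : FG := @MkFG (winv w) (winv_reduced (fg_red w)).

Lemma mulA a b c : fg_mul (fg_mul a b) c = fg_mul a (fg_mul b c).
Proof. apply: fg_ext => /=; apply: foldrA; [exact: fg_red b | exact: fg_red c]. Qed.

Lemma mulVK w s : fg_mul (fg_inv w) (fg_mul w s) = s.
Proof.
apply: fg_ext => /=; case: w => w _ /=; case: s => s Hs /=.
elim: w => [|a w IH] //=.
have E : forall T, reduced T -> push (gen_inv a) (push a T) = T.
  by move=> T HT; have := push_inv (gen_inv a) HT; rewrite gen_invK.
rewrite winv_cons foldr_cat /= E; [exact: IH | exact: foldr_push_reduced].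
Qed.

Lemma mulKV w x : fg_mul w (fg_mul (fg_inv w) x) = x.
Proof.
apply: fg_ext => /=; case: w => w _ /=; case: x => x Hx /=.
elim: w x Hx => [|a w IH] x Hx //=.
rewrite winv_cons foldr_cat /= IH; last exact: push_reduced.
by rewrite push_inv.
Qed.

Lemma mulr1 a : fg_mul a fg_e = a.
Proof.
apply: fg_ext => /=; case: a => a Ha /=.
by rewrite foldr_push_cat cats0.
Qed.

Lemma mulrV w : fg_mul w (fg_inv w) = fg_e.
Proof. by rewrite -[fg_inv w](mulr1 (fg_inv w)) mulKV. Qed.

Lemma invM w u : fg_inv (fg_mul w u) = fg_mul (fg_inv u) (fg_inv w).
Proof.
have H : fg_mul (fg_mul w u) (fg_mul (fg_inv u) (fg_inv w)) = fg_e.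
  by rewrite mulA mulKV mulrV.
by rewrite -(mulr1 (fg_inv _)) -H mulVK.
Qed.

Lemma lmulE g (S : fset) x : lmul g S x <-> S (fg_mul (fg_inv g) x).
Proof.
split; first by case=> s Hs ->; rewrite mulVK.
by move=> H; exists (fg_mul (fg_inv g) x) => //; rewrite mulKV.
Qed.

Lemma dw_nil (x : FG) : dw x <= 0 -> x = fg_e.
Proof.
case: x => [[|c s] H] //= Hd; first exact: fg_ext.
by have := nxt_gt c (dw s); rewrite /dw /= in Hd *; lia.
Qed.

Lemma push_cases c z : reduced z ->
  (exists z', z = gen_inv c :: z' /\ push c z = z') \/ push c z = c :: z.
Proof.
case: z => [|y z] _ /=; first by right.
case: ifP => [/eqP ->|_]; [left; by exists z | by right].
Qed.

Lemma Iset_d n (x : FG) : Iset n x <-> dw x <= n.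
Proof.
elim: n x => [|n IH] x /=.
  split; first by move=> ->.
  exact: dw_nil.
rewrite /fset_union lmulE !IH.
set c := lt4 n.
case: x => [s Hs] /=.
change (dw s <= n \/ dw (push (gen_inv c) s) <= n <-> dw s <= n.+1).
split.
  case=> [H|H]; first lia.
  have Hz := push_reduced (gen_inv c) Hs.
  have Es : s = push c (push (gen_inv c) s) by rewrite push_inv.
  move: H Hz Es; move: (push (gen_inv c) s) => z H Hz Es.
  case: (push_cases c Hz) => [[z' [Ez Ep]]|Ep]; rewrite Ep in Es; subst s.
    by rewrite Ez in H; have := dw_cons_gt (gen_inv c) z'; lia.
  rewrite /dw /= -/(dw z); apply: nxt_min; first lia.
  by rewrite lt4_mod.
move=> H; case: (leqP (dw s) n) => H2; first by left.
right; have Eq : dw s = n.+1 by lia.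
case: s Hs H H2 Eq => [|y s] Hs H H2 Eq; first by [].
have Ey : y = c.
  by apply: rk_inj; rewrite lt4_mod -(dw_cons_mod y s) Eq.
subst y; rewrite /= gen_invK eqxx.
have := dw_cons_gt c s; lia.
Qed.

Definition Ball (w : FG) (n : nat) : fset := fun x => dw (fg_mul (fg_inv w) x) <= n.

Lemma lmul_Ball w n : fset_eq (lmul w (Iset n)) (Ball w n).
Proof. by move=> x; rewrite lmulE Iset_d. Qed.

Lemma Ball_S w n x : Ball w n.+1 x <-> Ball w n x \/ Ball (fg_mul w (ell n)) n x.
Proof.
have H := Iset_d n.+1 (fg_mul (fg_inv w) x).
rewrite /= /fset_union lmulE !Iset_d in H.
rewrite /Ball invM mulA; exact: iff_sym H.
Qed.

Lemma size_winv u : size (winv u) = size u.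
Proof. by rewrite /winv size_rev size_map. Qed.

Lemma key_words n m (x y u : seq gen) : reduced x -> reduced y -> reduced u ->
  m <= n.+1 -> dw x <= n.+1 -> n < dw x ->
  n < dw (push (gen_inv (lt4 n)) y) -> dw y <= n.+1 ->
  dw (foldr push x (winv u)) <= m -> dw (foldr push y (winv u)) <= m -> u = [::].
Proof.
move=> Hx Hy Hu Hm Hx1 Hx2 Hy1 Hy2 Hux Huy.
set c := lt4 n in Hy1.
have Ex : exists x', x = c :: x'.
  case: x Hx Hx1 Hx2 {Hux} => [|z x'] Hx Hx1 Hx2; first by [].
  exists x'; congr (_ :: _); apply: rk_inj; rewrite lt4_mod -(dw_cons_mod z x').
  by congr (_ %% 4); lia.
have Hyc : (if y is z :: _ then z != c else true).
  case: y Hy Hy1 Hy2 {Huy} => [|z y'] // Hy Hy1 Hy2.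
  apply/negP => /eqP Ez; move: Hy1; rewrite /= Ez gen_invK eqxx.
  by have := dw_cons_gt c y'; rewrite Ez in Hy2; lia.
have Ey : push (gen_inv c) y = gen_inv c :: y.
  case: y Hy Hyc {Hy1 Hy2 Huy} => [|z y'] //= _ Hz.
  by rewrite gen_invK (negbTE Hz).
have Hy3 : n.+2 <= dw (gen_inv c :: y).
  rewrite Ey in Hy1.
  have := dw_cons_mod (gen_inv c) y; have := @inv_mod c; rewrite lt4_mod.
  move=> H1 H2; have : dw (gen_inv c :: y) <> n.+1 by move=> E; apply: H1; rewrite -H2 E.
  lia.
case: u Hu Hux Huy => [//|z u'] Hu Hux Huy.
case: Ex => x' Ex; subst x.
case: (eqVneq z c) => [Ez|Nz].
- rewrite foldr_push_cat in Huy; last first.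
    apply: reduced_cat => //; first exact: winv_reduced.
    case: y Hy Hyc {Hy1 Hy2 Hy3 Ey} => [|h y'] // _ Hh.
    case E: (winv (z :: u')) => [|q r]; first by [].
    by rewrite -E last_winv gen_invK Ez.
  move: Huy; rewrite winv_cons -catA cat1s Ez => H.
  have := dw_cat (winv u') (gen_inv c :: y); lia.
- rewrite foldr_push_cat in Hux; last first.
    apply: reduced_cat => //; first exact: winv_reduced.
    case E: (winv (z :: u')) => [|q r]; first by [].
    by rewrite -E last_winv gen_invK eq_sym.
  have := dw_cat (winv (z :: u')) (c :: x'); rewrite size_winv; change (size (z :: u')) with (size u').+1; lia.
Qed.

Lemma key_ball n m w v (x y : FG) : m <= n.+1 ->
  Ball w n.+1 x -> Ball v m x -> Ball w n.+1 y -> Ball v m y ->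
  ~ Ball w n x -> ~ Ball (fg_mul w (ell n)) n y -> v = w.
Proof.
move=> Hm Hx1 Hx2 Hy1 Hy2 Hx3 Hy3.
set u := fg_mul (fg_inv w) v.
have Ev : v = fg_mul w u by rewrite /u mulKV.
have E1 : forall z, fg_mul (fg_inv v) z = fg_mul (fg_inv u) (fg_mul (fg_inv w) z).
  by move=> z; rewrite {1}Ev invM mulA.
have E2 : fg_mul (fg_inv (fg_mul w (ell n))) y = fg_mul (fg_inv (ell n)) (fg_mul (fg_inv w) y).
  by rewrite invM mulA.
move: Hx2 Hy2 Hy3; rewrite /Ball !E1 E2 => Hx2 Hy2 Hy3.
rewrite /Ball in Hx1 Hy1 Hx3.
have Hu : fg_word u = [::].
  apply: (@key_words n m (fg_mul (fg_inv w) x) (fg_mul (fg_inv w) y) u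
     (fg_red _) (fg_red _) (fg_red _) Hm Hx1 _ _ Hy1 Hx2 Hy2).
  - lia.
  - by rewrite ltnNge; apply/negP.
have Eu : u = fg_e by exact: fg_ext.
by rewrite Ev Eu mulr1.
Qed.

Definition Rint (A : fset) : Prop :=
  (forall x, ~ A x) \/ exists u j, fset_eq A (Ball u j).

Lemma Rint_eq A B : fset_eq A B -> Rint B -> Rint A.
Proof.
move=> E [H|[u [j H]]]; [left => x /E; exact: H | right; exists u, j].
by move=> x; rewrite E H.
Qed.

Lemma Ball0 w x : Ball w 0 x <-> x = w.
Proof.
rewrite /Ball; split.
  move/dw_nil => H; by rewrite -(mulKV w x) H mulr1.
by move=> ->; rewrite -{2}(mulr1 w) mulVK.
Qed.

Definition inter2 w n v m : fset := fun x => Ball w n x /\ Ball v m x.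

Lemma main k : forall n m w v, n + m <= k -> Rint (inter2 w n v m).
Proof.
elim: k => [|k IH] n m w v.
- move=> H; have -> : n = 0 by lia. have -> : m = 0 by lia.
  case: (classic (w = v)) => [<-|Nwv].
    by right; exists w, 0 => x; split; [case|].
  left=> x [/Ball0 -> /Ball0]; exact: Nwv.
- wlog Hmn : n m w v / m <= n.
    move=> Hw H; case: (leqP m n) => h; first exact: Hw.
    apply: (@Rint_eq _ (inter2 v m w n)); first by move=> x; split; case.
    apply: Hw => //; [exact: ltnW | lia].
  case: n Hmn => [|n] Hmn H.
    have -> : m = 0 by lia.
    case: (classic (w = v)) => [<-|Nwv].
      by right; exists w, 0 => x; split; [case|].
    left=> x [/Ball0 -> /Ball0]; exact: Nwv.
  case: (classic (v = w /\ m = n.+1)) => [[-> ->]|Nvm].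
    by right; exists w, n.+1 => x; split; [case|].
  case: (classic (forall x, inter2 w n.+1 v m x -> Ball w n x)) => [A1|A1].
    apply: (@Rint_eq _ (inter2 w n v m)).
      move=> x; split; first by move=> Hx; split; [exact: A1 | case: Hx].
      case=> H1 H2; split => //; rewrite /Ball in H1 *; lia.
    apply: IH; lia.
  have [x [Hx1 Hx2]] : exists x, inter2 w n.+1 v m x /\ ~ Ball w n x.
    apply: NNPP => N; apply: A1 => x Hx; apply: NNPP => N2; apply: N; by exists x.
  case: (classic (forall y, inter2 w n.+1 v m y -> Ball (fg_mul w (ell n)) n y)) => [A2|A2].
    apply: (@Rint_eq _ (inter2 (fg_mul w (ell n)) n v m)).
      move=> y; split; first by move=> Hy; split; [exact: A2 | case: Hy].
      case=> H1 H2; split => //; apply/Ball_S; by right.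
    apply: IH; lia.
  have [y [Hy1 Hy2]] : exists y, inter2 w n.+1 v m y /\ ~ Ball (fg_mul w (ell n)) n y.
    apply: NNPP => N; apply: A2 => y Hy; apply: NNPP => N2; apply: N; by exists y.
  case: Hx1 Hy1 => Hx1 Hx3 [Hy1 Hy3].
  have Evw := key_ball Hmn Hx1 Hx3 Hy1 Hy3 Hx2 Hy2.
  exfalso; apply: Nvm; split => //; subst v.
  rewrite /Ball in Hx1 Hx2 Hx3; lia.
Qed.

Unset Implicit Arguments.
Theorem proposition2p6 (I J : fset) :
  is_interval I -> is_interval J -> is_interval (fset_inter I J).
Proof.
case=> [HI|[w [n HI]]]; first by move=> _; left=> x [/HI].
case=> [HJ|[v [m HJ]]]; first by left=> x [_ /HJ].
have : Rint (fset_inter I J).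
  apply: (@Rint_eq _ (inter2 w n v m)); last exact: (@main (n + m)).
  by move=> x; rewrite /fset_inter /inter2 HI HJ !lmul_Ball.
case=> [H|[u [j H]]]; [by left | right; exists u, j].
by move=> x; rewrite H lmul_Ball.
Qed.
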